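(* Let $(a_k)_{k\ge1}$ be positive integers, $M_0=0$, $M_1=0^{a_1-1}1$, $M_{k+1}=M_k^{a_{k+1}}M_{k-1}$ ($k\ge1$), $q_k=|M_k|$, and $\tilde M_k=(M_kM_{k-1})^{--}$ for $k\ge1$. Let $k\ge1$ and let $\mathbf{x}$ be an infinite word of the form $\mathbf{x}=UV\cdots$ (i.e. $UV$ is a prefix of $\mathbf{x}$), where $U$ is a finite word and $V$ is a factor of $M_k\tilde M_{k+1}$ with $|V|>q_k$. Then $r(|V|-q_k,\mathbf{x})\le|UV|$.
   Context: $|W|$ denotes the length of a word $W$; $W^{--}$ denotes $W$ deprived of its last two letters. For $\mathbf{x}=x_1x_2\ldots$, $x_i^j=x_i\cdots x_j$ and $r(n,\mathbf{x})=\min\{m\ge1:\ x_i^{i+n-1}=x_{m-n+1}^{m}\text{ for some } 1\le i\le m-n\}$. *)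

(* Defs.v *)
From mathcomp Require Import all_boot.
Set Implicit Arguments. Unset Strict Implicit. Unset Printing Implicit Defensive.

(* Words over the alphabet {0,1}, letters encoded as nat. Finite words are seq nat,
   an infinite word x = x_1 x_2 ... is a function nat -> nat with x_i = x (i-1). *)

(* Pairs (M_k, M_{k-1}); for k = 0 the second component is a dummy. *)
Fixpoint Mpair (a : nat -> nat) (k : nat) : seq nat * seq nat :=
  match k with
  | 0 => ([:: 0], [::])
  | k'.+1 =>
      match k' with
      | 0 => (nseq (a 1).-1 0 ++ [:: 1], [:: 0])
      | _ => let p := Mpair a k' in (flatten (nseq (a k) p.1) ++ p.2, p.1)
      end
  end.

Definition M (a : nat -> nat) (k : nat) : seq nat := (Mpair a k).1.

Definition q (a : nat -> nat) (k : nat) : nat := size (M a k).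

Definition dropLast2 (W : seq nat) : seq nat := take (size W - 2) W.

Definition Mtilde (a : nat -> nat) (k : nat) : seq nat := dropLast2 (M a k ++ M a k.-1).

(* x_i^j = x_i ... x_j  (1-based indices) *)
Definition factor (x : nat -> nat) (i j : nat) : seq nat :=
  mkseq (fun t => x (i - 1 + t)) (j.+1 - i).

(* m belongs to the set whose minimum is r(n,x):
   m >= 1 and x_i^{i+n-1} = x_{m-n+1}^m for some 1 <= i <= m-n. *)
Definition r_set (n : nat) (x : nat -> nat) (m : nat) : Prop :=
  1 <= m /\ exists i, 1 <= i /\ i <= m - n /\ factor x i (i + n - 1) = factor x (m - n + 1) m.

(* r(n,x) <= L, i.e. the set {m >= 1 : ...} has an element <= L
   (equivalently its minimum exists and is <= L). *)
Definition r_le (n : nat) (x : nat -> nat) (L : nat) : Prop :=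
  exists m, m <= L /\ r_set n x m.

(* Main.v *)
Require Import Defs.
From mathcomp Require Import all_boot.
From mathcomp Require Import zify.

Definition fl (n : nat) (s : seq nat) := flatten (nseq n s).

Lemma flS n s : fl n.+1 s = s ++ fl n s.
Proof. by []. Qed.

Lemma flSr n s : fl n.+1 s = fl n s ++ s.
Proof.
elim: n => [|n IH]; first by rewrite /fl /= cats0.
by rewrite [LHS]flS {1}IH catA -flS.
Qed.

Lemma size_fl n s : size (fl n s) = n * size s.
Proof. elim: n => [//|n IH]. by rewrite flS size_cat IH mulSn. Qed.

Definition Per (p : nat) (w : seq nat) :=
  forall i, i + p < size w -> nth 0 w i = nth 0 w (i + p).

Lemma per_fl n s : Per (size s) (fl n s).
Proof.
move=> i; case: n => [|n]; first by rewrite /fl.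
move=> hi.
have hi' : i < size (fl n s).
  move: hi; rewrite !size_fl mulSn; lia.
rewrite {1}flSr nth_cat hi' flS nth_cat.
have -> : (i + size s < size s) = false by lia.
by rewrite addnK.
Qed.

Lemma per_take p n v : Per p v -> Per p (take n v).
Proof.
move=> P i; rewrite size_take => hi.
have h1 : i + p < n by move: hi; case: ifP => hh; lia.
have h2 : i + p < size v by move: hi; case: ifP => hh; lia.
rewrite !nth_take //; last by lia.
exact: P.
Qed.

Lemma per_infix p V W : infix V W -> Per p W -> Per p V.
Proof.
move=> /infixP [s1 [s2 ->]] P i hi.
have := P (size s1 + i).
rewrite !size_cat !nth_cat.
have -> : (size s1 + i < size s1) = false by lia.
have -> : (size s1 + i + p < size s1) = false by lia.
rewrite -!addnA !addKn.
have h1 : i < size V by apply: leq_ltn_trans (leq_addr p i) hi.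
rewrite h1 hi.
apply; rewrite ltn_add2l; exact: ltn_addr.
Qed.

Lemma MS a k : 1 <= k -> M a k.+1 = fl (a k.+1) (M a k) ++ M a k.-1.
Proof. by case: k => [//|[|j]] _. Qed.

Lemma q_pos a (ha : forall k, 1 <= k -> 0 < a k) k : 0 < q a k.
Proof.
elim: k => [//|k IH].
case: k IH => [|k] IH.
  by rewrite /q /M /= size_cat /=; lia.
rewrite /q MS // size_cat size_fl.
have := ha k.+2 isT. rewrite /q in IH. nia.
Qed.

Arguments q_pos {a} ha k.

Lemma dl2_cat F X : 2 <= size X -> dropLast2 (F ++ X) = F ++ dropLast2 X.
Proof.
move=> hX; rewrite /dropLast2 size_cat take_cat.
have -> : (size F + size X - 2 < size F) = false by lia.
by have -> : size F + size X - 2 - size F = size X - 2 by lia.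
Qed.

Lemma nseq_rcons0 b : 0 :: nseq b 0 = nseq b 0 ++ [:: 0].
Proof. by elim: b => [//|b IH] /=; rewrite IH. Qed.

Lemma swap a (ha : forall k, 1 <= k -> 0 < a k) k : 1 <= k ->
  dropLast2 (M a k ++ M a k.-1) = dropLast2 (M a k.-1 ++ M a k).
Proof.
elim: k => [//|k IH] _.
case: k IH => [_|k IH].
  rewrite /M /=.
  have := ha 1 isT; case: (a 1) => [//|b] _ /=.
rewrite -cat_cons nseq_rcons0 -!catA (dl2_cat _ [:: 1; 0]) // (dl2_cat _ [:: 0; 1]) //.
have hs : forall j, 2 <= size (M a j ++ M a j.+1).
  by move=> j; rewrite size_cat; have := q_pos ha j; have := q_pos ha j.+1;
     rewrite /q; lia.
have hs' : forall j, 2 <= size (M a j.+1 ++ M a j).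
  by move=> j; rewrite size_cat; have := q_pos ha j; have := q_pos ha j.+1;
     rewrite /q; lia.
rewrite MS //= -catA dl2_cat // -(IH isT) /=.
by rewrite catA -flS flSr -catA [RHS]dl2_cat.
Qed.

Arguments swap {a} ha k _.

Lemma pref a (ha : forall k, 1 <= k -> 0 < a k) k : 1 <= k ->
  take (q a k.-1 - 2) (M a k.-1) = take (q a k.-1 - 2) (M a k).
Proof.
case: k => [//|[|j]] _; first by rewrite /= (_ : q a 0 - 2 = 0) // !take0.
rewrite MS //=.
have := ha j.+2 isT; case: (a j.+2) => [//|c] _.
rewrite flS -catA take_cat.
by have -> : (q a j.+1 - 2 < size (M a j.+1)) = true by rewrite /q; apply/idP;
  have := q_pos ha j.+1; rewrite /q; lia.
Qed.

Arguments pref {a} ha k _.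

Lemma per_main a (ha : forall k, 1 <= k -> 0 < a k) k : 1 <= k ->
  Per (q a k) (M a k ++ Mtilde a k.+1).
Proof.
move=> hk.
have hs : 2 <= size (M a k.-1 ++ M a k).
  by rewrite size_cat; have := q_pos ha k; have := q_pos ha k.-1; rewrite /q; lia.
rewrite /Mtilde /= MS // -catA dl2_cat // -swap //.
set N := q a k + q a k.-1 - 2.
have hT : dropLast2 (M a k ++ M a k.-1) = take N (M a k ++ M a k).
  rewrite /dropLast2 size_cat -/(q a k) -/(q a k.-1) -/N !take_cat.
  case: ifP => // _.
  have -> : N - size (M a k) = q a k.-1 - 2 by rewrite /N /q; lia.
  by rewrite pref.
rewrite hT catA -flS.
set G := fl _ _.
have -> : G ++ take N (M a k ++ M a k) = take (size G + N) (G ++ M a k ++ M a k).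
  rewrite [RHS]take_cat.
  by rewrite (ltnNge (size G + N)) leq_addr /= addKn.
rewrite catA /G -flSr -flSr.
exact: per_take (per_fl _ _).
Qed.

Arguments per_main {a} ha k _.

Theorem lemma7p4 (a : nat -> nat) (ha : forall k, 1 <= k -> 0 < a k)
  (k : nat) (hk : 1 <= k) (x : nat -> nat) (U V : seq nat)
  (hpref : forall t, t < size (U ++ V) -> x t = nth 0 (U ++ V) t)
  (hV : infix V (M a k ++ Mtilde a k.+1))
  (hlen : q a k < size V) :
  r_le (size V - q a k) x (size (U ++ V)).
Proof.
have P := @per_infix _ _ _ hV (per_main ha k hk).
have qp := q_pos ha k.
move: P hlen qp; set p := q a k => P hlen qp.
set n := size V - p.
exists (size (U ++ V)); split => //.
rewrite size_cat; split; first lia.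
exists (size U).+1; split => //; split; first lia.
rewrite /factor.
have -> : ((size U).+1 + n - 1).+1 - (size U).+1 = n by lia.
have -> : (size U + size V).+1 - (size U + size V - n + 1) = n by lia.
rewrite /mkseq; apply/eq_in_map => t; rewrite mem_iota add0n => ht.
have hs : forall u, u < size V -> x (size U + u) = nth 0 V u.
  move=> u hu; rewrite hpref ?size_cat; last by lia.
  by rewrite nth_cat ltnNge leq_addr /= addKn.
have -> : (size U).+1 - 1 + t = size U + t by lia.
have -> : size U + size V - n + 1 - 1 + t = size U + (t + p) by lia.
rewrite !hs; try lia.
apply: P; lia.
Qed.
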